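(* Let $\mathcal C$ be an operadic category with set of objects $C$. Then the following data form a skew monoidal category $\mathrm{Coll}_{\mathcal C}(\mathbf{Set})$: the underlying category $\mathbf{Set}/C$; the tensor product $*$ with $(X*Y)_c=\sum_{\varphi:c\to d}X_d\times\prod_{i\in|d|}Y_{\varphi^{-1}i}$; the unit $U$ given by the set of trivial objects with its inclusion into $C$; and the structure maps $\alpha:(X*Y)*Z\to X*(Y*Z)$, $\alpha(x,\psi,y,\varphi,z)=(x,\psi\varphi,y,\varphi^\psi,z)$; $\lambda:U*X\to X$, $\lambda(u,\varphi,x)=x$; $\rho:X\to X*U$, $\rho(x)=(x,1_{\partial x},(1_{\partial x}^{-1}i)_{i\in|\partial x|})$.
   Context: Operadic categories: $\mathcal S$ is a skeleton of finite sets (objects $\mathbb N$), with fixed equivalences $R_I:\mathcal S/I\to\mathcal S^I$ sending $f:J\to I$ to its fibres. An operadic category is a category $\mathcal C$ with a functor $|\cdot|:\mathcal C\to\mathcal S$ and functors $R_c:\mathcal C/c\to\mathcal C^{|c|}$ with $|\cdot|^{|c|}\circ R_c=R_{|c|}\circ(|\cdot|/c)$; the fibre $\psi^{-1}i$ of $\psi:c\to d$ at $i\in|d|$ is the $i$-th component of $R_d(\psi)$ (so $|\psi^{-1}i|=|\psi|^{-1}i$); for $\varphi:b\to c,\psi:c\to d$, $\varphi^\psi:R_d(\psi\varphi)\to R_d(\psi)$ is $R_d$ applied to $\varphi:\psi\varphi\to\psi$ in $\mathcal C/d$, with components $\varphi^\psi_j:(\psi\varphi)^{-1}j\to\psi^{-1}j$;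 $u$ is trivial if $|u|=1$ and $R_u=\mathrm{dom}$. Axioms: fibres of identities are trivial; double slice condition: for $\psi:c\to d$, $R_c\circ(\mathrm{dom}/\psi)=(\cong)\circ(\prod_jR_{\psi^{-1}j})\circ(R_d/\psi)$ as functors $(\mathcal C/d)/\psi\to\mathcal C^{|c|}$, using $\mathcal C^{|d|}/R_d\psi\cong\prod_j\mathcal C/\psi^{-1}j$ and $\prod_j\mathcal C^{|\psi^{-1}j|}\cong\mathcal C^{|c|}$ via $|c|\cong\sum_j|\psi|^{-1}j$. Notation: an object of $\mathbf{Set}/C$ is a set $X$ with $\partial:X\to C$, and $X_c=\partial^{-1}(c)$. An element of $(X*Y)_c$ is written $(x,\varphi,y)$ with $\varphi:c\to d$, $x\in X_d$, $y=(y_i)_{i\in|d|}$, $y_i\in Y_{\varphi^{-1}i}$, and $\partial(x,\varphi,y)=c$. An element of $((X*Y)*Z)_c$ is written $(x,\psi,y,\varphi,z)$ with $\varphi:c\to d$, $\psi:d\to e$, $x\in X_e$, $y_j\in Y_{\psi^{-1}j}$ ($j\in|e|$), $z_i\in Z_{\varphi^{-1}i}$ ($i\in|d|$); its image $(x,\psi\varphi,y,\varphi^\psi,z)$ denotes the element of $X*(Y*Z)$ whose $j$-th component in $Y*Z$ is $(y_j,\varphi^\psi_j,(z_i)_{i\in|\psi^{-1}j|})$. In $U*X$ an element has form $(u,\varphi,x)$ with $\varphi:c\to u$, $u$ trivial, $x\in X_c$ (the unique fibre of $\varphi$ being $c$). A skew monoidal category is a category $\mathcal E$ with a functor $*:\mathcal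 E\times\mathcal E\to\mathcal E$, an object $U$, and natural (not necessarily invertible) maps $\alpha:(X*Y)*Z\to X*(Y*Z)$, $\lambda:U*X\to X$, $\rho:X\to X*U$ satisfying: $\lambda_U\rho_U=1_U$; $\lambda_{X*Y}\alpha_{U,X,Y}=\lambda_X*1_Y$; $\alpha_{X,Y,U}\rho_{X*Y}=1_X*\rho_Y$; $(1_X*\lambda_Y)\alpha_{X,U,Y}(\rho_X*1_Y)=1_{X*Y}$; and the pentagon $(1*\alpha)\alpha(\alpha*1)=\alpha\alpha$ as maps $((W*X)*Y)*Z\to W*(X*(Y*Z))$. *)

(* Defs.v *)
From HB Require Import structures.
From mathcomp Require Import all_boot.

Set Implicit Arguments.
Unset Strict Implicit.
Unset Printing Implicit Defensive.

(* The skeleton S of finite sets: objects are nats n (standing for 'I_n),   *)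
(* morphisms 'I_m -> 'I_n are represented by functions g : nat -> nat,      *)
(* only their values on [0, m) being relevant.                              *)
(* The fixed equivalence R_I : S/I -> S^I sends g : J -> I to its fibres,   *)
(* where the fibre g^{-1} i is identified with 'I_(#g^{-1} i) via the       *)
(* ORDER-PRESERVING enumeration.  [fibre g m i] is the increasing list of   *)
(* the elements of g^{-1} i (for g : 'I_m -> _); its l-th element is        *)
(* [nth 0 (fibre g m i) l], and the position of k in its fibre is           *)
(* [index k (fibre g m (g k))].                                             *)
Definition fibre (g : nat -> nat) (m i : nat) : seq nat :=
  [seq k <- iota 0 m | g k == i].

(* Data of an operadic category, with the category presented single-sorted: *)
(* a type of objects, a type of arrows with dom/cod, identities and a       *)
(* (total) composition [cmp g f] = g \o f, meaningful when cod f = dom g.   *)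
(*   card c        = |c|                                                    *)
(*   cardf f       = |f| : 'I_|dom f| -> 'I_|cod f|                         *)
(*   fib f i       = f^{-1} i         (i < |cod f|)                         *)
(*   fibm phi psi i = phi^psi_i : (psi phi)^{-1} i -> psi^{-1} i            *)
(*                   i.e. R_d applied to phi : psi phi -> psi in C/d.       *)
Record opdata := OpData {
  Obj : Type;
  Arr : Type;
  dom : Arr -> Obj;
  cod : Arr -> Obj;
  idA : Obj -> Arr;
  cmp : Arr -> Arr -> Arr;
  card : Obj -> nat;
  cardf : Arr -> nat -> nat;
  fib : Arr -> nat -> Obj;
  fibm : Arr -> Arr -> nat -> Arr
}.

Section OperadicCategory.
Variable C : opdata.
Local Notation Obj := (Obj C).
Local Notation Arr := (Arr C).
Local Notation dom := (@dom C).
Local Notation cod := (@cod C).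
Local Notation idA := (@idA C).
Local Notation cmp := (@cmp C).
Local Notation card := (@card C).
Local Notation cardf := (@cardf C).
Local Notation fib := (@fib C).
Local Notation fibm := (@fibm C).

(* u is trivial: |u| = 1 and R_u = dom : C/u -> C^1 = C. *)
Definition trivial (u : Obj) : Prop :=
  [/\ card u = 1,
      (forall f, cod f = u -> fib f 0 = dom f) &
      (forall theta f, cod f = u -> cod theta = dom f -> fibm theta f 0 = theta)].

Record is_opcat : Prop := {
  dom_id : forall c, dom (idA c) = c;
  cod_id : forall c, cod (idA c) = c;
  dom_cmp : forall f g, cod f = dom g -> dom (cmp g f) = dom f;
  cod_cmp : forall f g, cod f = dom g -> cod (cmp g f) = cod g;
  cmp_idl : forall f, cmp (idA (cod f)) f = f;
  cmp_idr : forall f, cmp f (idA (dom f)) = f;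
  cmpA : forall f g h, cod f = dom g -> cod g = dom h ->
           cmp h (cmp g f) = cmp (cmp h g) f;
  cardf_bound : forall f i, i < card (dom f) -> cardf f i < card (cod f);
  cardf_id : forall c i, i < card c -> cardf (idA c) i = i;
  cardf_cmp : forall f g i, cod f = dom g -> i < card (dom f) ->
           cardf (cmp g f) i = cardf g (cardf f i);
  dom_fibm : forall phi psi i, cod phi = dom psi -> i < card (cod psi) ->
           dom (fibm phi psi i) = fib (cmp psi phi) i;
  cod_fibm : forall phi psi i, cod phi = dom psi -> i < card (cod psi) ->
           cod (fibm phi psi i) = fib psi i;
  fibm_id : forall psi i, i < card (cod psi) ->
           fibm (idA (dom psi)) psi i = idA (fib psi i);
  fibm_cmp : forall theta phi psi i,
           cod theta = dom phi -> cod phi = dom psi -> i < card (cod psi) ->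
           fibm (cmp phi theta) psi i
           = cmp (fibm phi psi i) (fibm theta (cmp psi phi) i);
  (* |.|^|d| o R_d = R_|d| o (|.|/d), on objects and on morphisms *)
  card_fib : forall f i, i < card (cod f) ->
           card (fib f i) = size (fibre (cardf f) (card (dom f)) i);
  cardf_fibm : forall phi psi i l,
           cod phi = dom psi -> i < card (cod psi) ->
           l < card (fib (cmp psi phi) i) ->
           cardf (fibm phi psi i) l
           = index (cardf phi (nth 0 (fibre (cardf (cmp psi phi))
                                             (card (dom phi)) i) l))
                   (fibre (cardf psi) (card (dom psi)) i);
  fib_id_trivial : forall c i, i < card c -> trivial (fib (idA c) i);
  (* double slice condition, on objects and on morphisms; k in |c| corresponds
     to (j, l) = (|psi| k, position of k in |psi|^{-1} j) *)
  double_slice_ob : forall phi psi k,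
           cod phi = dom psi -> k < card (cod phi) ->
           fib phi k
           = fib (fibm phi psi (cardf psi k))
                 (index k (fibre (cardf psi) (card (dom psi)) (cardf psi k)));
  double_slice_mor : forall theta phi psi k,
           cod theta = dom phi -> cod phi = dom psi -> k < card (cod phi) ->
           fibm theta phi k
           = fibm (fibm theta (cmp psi phi) (cardf psi k))
                  (fibm phi psi (cardf psi k))
                  (index k (fibre (cardf psi) (card (dom psi)) (cardf psi k)))
}.

Record SetOver := { carrier :> Type; bd : carrier -> Obj }.

Record Hom (X Y : SetOver) := {
  hfun :> X -> Y;
  hbd : forall x, bd (hfun x) = bd x }.

Definition idH (X : SetOver) : Hom X X := @Build_Hom X X id (fun _ => erefl).

Definition cmpH (X Y Z : SetOver) (g : Hom Y Z) (f : Hom X Y) : Hom X Z :=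
  @Build_Hom X Z (fun x => g (f x))
    (fun x => etrans (hbd g (f x)) (hbd f x)).

Definition heq (X Y : SetOver) (f g : Hom X Y) : Prop := forall x, f x = g x.

(* Elements of (X*Y)_c : (x, phi, y) with phi : c -> d, x in X_d,
   y_i in Y_{phi^{-1} i} for i in |d|.  Here t_arr = phi, and c = dom phi. *)
Record tens_el (X Y : SetOver) := TensEl {
  t_arr : Arr;
  t_x : X;
  t_y : 'I_(card (cod t_arr)) -> Y;
  t_xbd : bd t_x = cod t_arr;
  t_ybd : forall i : 'I_(card (cod t_arr)), bd (t_y i) = fib t_arr i }.
Arguments t_arr {X Y} t.
Arguments t_x {X Y} t.
Arguments t_y {X Y} t i.
Arguments t_xbd {X Y} t.
Arguments t_ybd {X Y} t i.

Definition tens (X Y : SetOver) : SetOver :=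
  {| carrier := tens_el X Y; bd := fun e => dom (t_arr e) |}.

Definition tensH (X X' Y Y' : SetOver) (f : Hom X X') (g : Hom Y Y')
  : Hom (tens X Y) (tens X' Y').
Proof.
refine (@Build_Hom (tens X Y) (tens X' Y')
  (fun e : tens_el X Y =>
     @TensEl X' Y' (t_arr e) (f (t_x e)) (fun i => g (t_y e i)) _ _)
  (fun _ => erefl)).
- exact: etrans (hbd f _) (t_xbd e).
- move=> i; exact: etrans (hbd g _) (t_ybd e i).
Defined.

Definition Uob : SetOver :=
  {| carrier := {u : Obj | trivial u}; bd := fun u => proj1_sig u |}.

Definition skew_monoidal
  (alpha : forall X Y Z : SetOver, Hom (tens (tens X Y) Z) (tens X (tens Y Z)))
  (lam : forall X : SetOver, Hom (tens Uob X) X)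
  (rho : forall X : SetOver, Hom X (tens X Uob)) : Prop :=

      (forall X Y, heq (tensH (idH X) (idH Y)) (idH (tens X Y))) /\
      (forall X X' X'' Y Y' Y'' (f : Hom X X') (f' : Hom X' X'')
              (g : Hom Y Y') (g' : Hom Y' Y''),
          heq (tensH (cmpH f' f) (cmpH g' g)) (cmpH (tensH f' g') (tensH f g))) /\
      (forall X X' Y Y' Z Z' (f : Hom X X') (g : Hom Y Y') (h : Hom Z Z'),
          heq (cmpH (alpha X' Y' Z') (tensH (tensH f g) h))
              (cmpH (tensH f (tensH g h)) (alpha X Y Z))) /\
      (forall X X' (f : Hom X X'),
          heq (cmpH (lam X') (tensH (idH Uob) f)) (cmpH f (lam X))) /\
      (forall X X' (f : Hom X X'),
          heq (cmpH (rho X') f) (cmpH (tensH f (idH Uob)) (rho X))) /\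
      heq (cmpH (lam Uob) (rho Uob)) (idH Uob) /\
      (forall X Y, heq (cmpH (lam (tens X Y)) (alpha Uob X Y))
                       (tensH (lam X) (idH Y))) /\
      (forall X Y, heq (cmpH (alpha X Y Uob) (rho (tens X Y)))
                       (tensH (idH X) (rho Y))) /\
          (forall X Y, heq (cmpH (tensH (idH X) (lam Y))
                              (cmpH (alpha X Uob Y) (tensH (rho X) (idH Y))))
                           (idH (tens X Y))) /\
          (forall W X Y Z,
             heq (cmpH (tensH (idH W) (alpha X Y Z))
                   (cmpH (alpha W (tens X Y) Z) (tensH (alpha W X Y) (idH Z))))
                 (cmpH (alpha W X (tens Y Z)) (alpha (tens W X) Y Z))).

(* The formulas defining alpha, lambda, rho.
   alpha(x, psi, y, phi, z) = (x, psi phi, y, phi^psi, z): the j-th component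
   in Y*Z is (y_j, phi^psi_j, (z_k)_{k in |psi|^{-1} j}), the l-th element of
   the (order-preserving) enumeration of |psi|^{-1} j being z_k for k the
   l-th element of the fibre of |psi| over j. *)
Definition alpha_formula
  (alpha : forall X Y Z : SetOver, Hom (tens (tens X Y) Z) (tens X (tens Y Z)))
  : Prop :=
  forall (X Y Z : SetOver) (e : tens_el (tens X Y) Z),
    let phi := t_arr e in
    let e1 : tens_el X Y := t_x e in
    let psi := t_arr e1 in
    let f : tens_el X (tens Y Z) := alpha X Y Z e in
    [/\ t_arr f = cmp psi phi,
        t_x f = t_x e1 &
        forall (j : 'I_(card (cod (t_arr f)))) (j' : 'I_(card (cod psi))),
          nat_of_ord j = nat_of_ord j' ->
          let g : tens_el Y Z := t_y f j in
          [/\ t_arr g = fibm phi psi j,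
              t_x g = t_y e1 j' &
              forall (l : 'I_(card (cod (t_arr g)))) (k : 'I_(card (cod phi))),
                nat_of_ord k = nth 0 (fibre (cardf psi) (card (dom psi)) j) l ->
                t_y g l = t_y e k]].

(* lambda(u, phi, x) = x, x being the unique component of the family. *)
Definition lam_formula (lam : forall X : SetOver, Hom (tens Uob X) X) : Prop :=
  forall (X : SetOver) (e : tens_el Uob X) (i : 'I_(card (cod (t_arr e)))),
    lam X e = t_y e i.

Definition rho_formula (rho : forall X : SetOver, Hom X (tens X Uob)) : Prop :=
  forall (X : SetOver) (x : X),
    let f : tens_el X Uob := rho X x in
    [/\ t_arr f = idA (bd x),
        t_x f = x &
        forall i : 'I_(card (cod (t_arr f))),
          proj1_sig (t_y f i) = fib (idA (bd x)) i].

End OperadicCategory.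

(* Main.v *)
Require Import Defs.
From HB Require Import structures.
From mathcomp Require Import all_boot.
From Stdlib Require Import FunctionalExtensionality ProofIrrelevance.

Set Implicit Arguments.
Unset Strict Implicit.
Unset Printing Implicit Defensive.

Lemma fibre_uniq g m i : uniq (fibre g m i).
Proof. by rewrite /fibre filter_uniq // iota_uniq. Qed.

Lemma mem_fibre g m i k : (k \in fibre g m i) = (k < m) && (g k == i).
Proof. by rewrite /fibre mem_filter mem_iota add0n andbC. Qed.

Lemma nth_fibre_lt g m i l : l < size (fibre g m i) -> nth 0 (fibre g m i) l < m.
Proof. by move=> H; have := mem_nth 0 H; rewrite mem_fibre => /andP[]. Qed.

Lemma nth_fibre_g g m i l : l < size (fibre g m i) -> g (nth 0 (fibre g m i) l) = i.
Proof. by move=> H; have := mem_nth 0 H; rewrite mem_fibre => /andP[_ /eqP]. Qed.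

Lemma index_nth_fibre g m i l : l < size (fibre g m i) ->
  index (nth 0 (fibre g m i) l) (fibre g m i) = l.
Proof. by move=> H; rewrite index_uniq // fibre_uniq. Qed.

Lemma ord_congr T n (f : 'I_n -> T) (i1 i2 : 'I_n) : i1 = i2 :> nat -> f i1 = f i2.
Proof. by move=> /val_inj ->. Qed.

Arguments t_y {C X Y} t _.
Arguments t_ybd {C X Y} t i.

Section Opcat.
Variable C : opdata.
Hypothesis HC : is_opcat C.

Lemma tens_el_eq (X Y : SetOver C) (e1 e2 : tens_el X Y) :
  t_arr e1 = t_arr e2 -> t_x e1 = t_x e2 ->
  (forall (i1 : 'I_(Defs.card (cod (t_arr e1)))) (i2 : 'I_(Defs.card (cod (t_arr e2)))),
      i1 = i2 :> nat -> t_y e1 i1 = t_y e2 i2) -> e1 = e2.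
Proof.
case: e1 => a1 x1 y1 xb1 yb1; case: e2 => a2 x2 y2 xb2 yb2 /= ea ex ey.
subst a2 x2.
have ey' : y1 = y2 by apply: functional_extensionality => i; apply: ey.
subst y2. f_equal; apply: proof_irrelevance.
Qed.

Lemma U_triv (X : SetOver C) (e : tens_el (Uob C) X) : trivial (cod (t_arr e)).
Proof. rewrite -(t_xbd e); exact: (proj2_sig (t_x e)). Qed.

Lemma U_card (X : SetOver C) (e : tens_el (Uob C) X) : Defs.card (cod (t_arr e)) = 1.
Proof. by case: (U_triv e). Qed.

Lemma U_lt0 (X : SetOver C) (e : tens_el (Uob C) X) : 0 < Defs.card (cod (t_arr e)).
Proof. by rewrite U_card. Qed.

Definition lamf (X : SetOver C) (e : tens_el (Uob C) X) : X :=
  t_y e (Ordinal (U_lt0 e)).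

Lemma lamf_bd (X : SetOver C) (e : tens_el (Uob C) X) : bd (lamf e) = dom (t_arr e).
Proof.
rewrite /lamf (t_ybd e) /=. case: (U_triv e) => _ H _. exact: H.
Qed.

Definition lam (X : SetOver C) : Hom (tens (Uob C) X) X :=
  @Build_Hom C (tens (Uob C) X) X (@lamf X) (@lamf_bd X).

Lemma rho_triv (X : SetOver C) (x : X) (i : 'I_(Defs.card (cod (idA (bd x))))) :
  trivial (fib (idA (bd x)) i).
Proof. apply: (fib_id_trivial HC); have := ltn_ord i; move: (nat_of_ord i) => n; by rewrite (cod_id HC). Qed.

Definition rhof (X : SetOver C) (x : X) : tens_el X (Uob C) :=
  @TensEl C X (Uob C) (idA (bd x)) x
    (fun i => exist _ (fib (idA (bd x)) i) (@rho_triv X x i))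
    (esym (cod_id HC _)) (fun i => erefl).

Definition rho (X : SetOver C) : Hom X (tens X (Uob C)) :=
  @Build_Hom C X (tens X (Uob C)) (@rhof X) (fun x => dom_id HC (bd x)).

Section Alpha.
Variables X Y Z : SetOver C.
Variable e : tens_el (tens X Y) Z.
Let phi := t_arr e.
Let psi := t_arr (t_x e).

Lemma a_H1 : cod phi = dom psi.
Proof. exact: esym (t_xbd e). Qed.

Lemma a_k_lt (j : nat) (Hj : j < Defs.card (cod psi)) (l : 'I_(Defs.card (cod (fibm phi psi j)))) :
  nth 0 (fibre (cardf psi) (Defs.card (dom psi)) j) l < Defs.card (cod phi).
Proof.
rewrite a_H1; apply: nth_fibre_lt.
by rewrite -(card_fib HC) // -(cod_fibm HC a_H1 Hj).
Qed.

Lemma a_in_xbd (j : nat) (Hj : j < Defs.card (cod psi)) :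
  bd (t_y (t_x e) (Ordinal Hj)) = cod (fibm phi psi j).
Proof. by rewrite (t_ybd (t_x e)) (cod_fibm HC a_H1 Hj). Qed.

Lemma a_in_ybd (j : nat) (Hj : j < Defs.card (cod psi)) (l : 'I_(Defs.card (cod (fibm phi psi j)))) :
  bd (t_y e (Ordinal (a_k_lt Hj l))) = fib (fibm phi psi j) l.
Proof.
rewrite (t_ybd e) /=.
have Hl : l < size (fibre (cardf psi) (Defs.card (dom psi)) j).
  by rewrite -(card_fib HC) // -(cod_fibm HC a_H1 Hj).
rewrite (double_slice_ob HC a_H1 (a_k_lt Hj l)) nth_fibre_g // index_nth_fibre //.
Qed.

Definition alpha_in (j : nat) (Hj : j < Defs.card (cod psi)) : tens_el Y Z :=
  @TensEl C Y Z (fibm phi psi j) (t_y (t_x e) (Ordinal Hj))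
     (fun l => t_y e (Ordinal (a_k_lt Hj l))) (a_in_xbd Hj) (a_in_ybd Hj).

Lemma a_j_lt (j : 'I_(Defs.card (cod (cmp psi phi)))) : j < Defs.card (cod psi).
Proof. by have := ltn_ord j; move: (nat_of_ord j) => n; rewrite (cod_cmp HC a_H1). Qed.

Lemma a_xbd : bd (t_x (t_x e)) = cod (cmp psi phi).
Proof. by rewrite (t_xbd (t_x e)) (cod_cmp HC a_H1). Qed.

Lemma a_ybd (j : 'I_(Defs.card (cod (cmp psi phi)))) :
  bd (s := tens Y Z) (alpha_in (a_j_lt j)) = fib (cmp psi phi) j.
Proof. by rewrite /= (dom_fibm HC a_H1 (a_j_lt j)). Qed.

Definition alphaf : tens_el X (tens Y Z) :=
  @TensEl C X (tens Y Z) (cmp psi phi) (t_x (t_x e))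
    (fun j => alpha_in (a_j_lt j)) a_xbd a_ybd.

Lemma alphaf_bd : bd (s := tens X (tens Y Z)) alphaf = dom phi.
Proof. by rewrite /= (dom_cmp HC a_H1). Qed.
End Alpha.

Definition alpha (X Y Z : SetOver C) : Hom (tens (tens X Y) Z) (tens X (tens Y Z)) :=
  @Build_Hom C (tens (tens X Y) Z) (tens X (tens Y Z)) (@alphaf X Y Z) (@alphaf_bd X Y Z).

Lemma alpha_ok : alpha_formula alpha.
Proof.
move=> X Y Z e /=; split => // j j' Hjj /=; split => //.
  by apply: ord_congr.
move=> l k Hk; by apply: ord_congr.
Qed.

Lemma lam_ok : lam_formula lam.
Proof.
move=> X e i /=; rewrite /lamf; apply: ord_congr.
case: i => [[|n] Hn] //=; by rewrite U_card in Hn.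
Qed.

Lemma rho_ok : rho_formula rho.
Proof. by move=> X x /=. Qed.
End Opcat.

Lemma comb (f g h r : nat -> nat) c d j m n :
  (forall i, i < c -> f i < d) ->
  (forall i, i < c -> h i = g (f i)) ->
  (forall l, l < size (fibre h c j) -> r l = index (f (nth 0 (fibre h c j) l)) (fibre g d j)) ->
  m < size (fibre g d j) -> n < size (fibre r (size (fibre h c j)) m) ->
  nth 0 (fibre h c j) (nth 0 (fibre r (size (fibre h c j)) m) n)
  = nth 0 (fibre f c (nth 0 (fibre g d j) m)) n.
Proof.
move=> Hf Hh Hr Hm Hn.
set A := fibre h c j; set F := fibre g d j; set k := nth 0 F m.
have E : map (nth 0 A) (fibre r (size A) m) = fibre f c k.
  rewrite {1}/fibre.
  rewrite (@eq_in_filter _ _ (fun l => f (nth 0 A l) == k)); last first.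
    move=> l; rewrite mem_iota add0n => /andP[_ Hl].
    rewrite Hr //.
    have HA : nth 0 A l \in A by apply: mem_nth.
    move: HA; rewrite mem_fibre => /andP[Hlc /eqP Hhl].
    have HF : f (nth 0 A l) \in F by rewrite mem_fibre Hf // -Hhl Hh // eqxx.
    rewrite /k; apply/eqP/eqP => [<-|->]; first by rewrite nth_index.
    by rewrite index_nth_fibre.
  rewrite -(filter_map (nth 0 A) (fun i => f i == k)).
  have -> : map (nth 0 A) (iota 0 (size A)) = A by exact: mkseq_nth.
  rewrite /A /fibre -filter_predI; apply: eq_in_filter => i.
  rewrite mem_iota add0n => /andP[_ Hi] /=.
  case Efk: (f i == k); rewrite ?andbF ?andbT //.
  move/eqP: Efk => Efk; by rewrite Hh // Efk /k /F nth_fibre_g // eqxx.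
by rewrite -E (nth_map 0).
Qed.

Lemma sig_eq T (P : T -> Prop) (a b : {x | P x}) : proj1_sig a = proj1_sig b -> a = b.
Proof. case: a => a pa; case: b => b pb /= E; subst b; f_equal; apply: proof_irrelevance. Qed.

Lemma fibre_const0 (g : nat -> nat) m : (forall k, k < m -> g k = 0) -> fibre g m 0 = iota 0 m.
Proof.
move=> H; rewrite /fibre; apply/all_filterP/allP => k; rewrite mem_iota add0n => /andP[_ Hk].
by rewrite H.
Qed.

Lemma fibre_idlike (g : nat -> nat) m j : (forall k, k < m -> g k = k) -> j < m -> fibre g m j = [:: j].
Proof.
move=> H Hj; rewrite /fibre.
rewrite (@eq_in_filter _ _ (pred1 j)); last first.
  by move=> k; rewrite mem_iota add0n => /andP[_ Hk] /=; rewrite H.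
by rewrite filter_pred1_uniq ?iota_uniq // mem_iota add0n.
Qed.

Lemma ord_lt_eq n m (i : 'I_n) : n = m -> i < m.
Proof. by move=> <-. Qed.

Section Sk.
Variable C : opdata.
Hypothesis HC : is_opcat C.

Lemma p_tens_id (X Y : SetOver C) : heq (tensH (idH X) (idH Y)) (idH (tens X Y)).
Proof. move=> e; apply: tens_el_eq => //= i1 i2 H; by apply: ord_congr. Qed.

Lemma p_tens_cmp (X X' X'' Y Y' Y'' : SetOver C) (f : Hom X X') (f' : Hom X' X'')
              (g : Hom Y Y') (g' : Hom Y' Y'') :
          heq (tensH (cmpH f' f) (cmpH g' g)) (cmpH (tensH f' g') (tensH f g)).
Proof. move=> e; apply: tens_el_eq => //= i1 i2 H; by rewrite (ord_congr _ H). Qed.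

Lemma p_alpha_nat (X X' Y Y' Z Z' : SetOver C) (f : Hom X X') (g : Hom Y Y') (h : Hom Z Z') :
          heq (cmpH (alpha HC X' Y' Z') (tensH (tensH f g) h))
              (cmpH (tensH f (tensH g h)) (alpha HC X Y Z)).
Proof.
move=> e; apply: tens_el_eq => //= j1 j2 Hj; apply: tens_el_eq => /=.
- by rewrite Hj.
- by congr (_ _); congr (_ _); apply: val_inj.
move=> l1 l2 Hl; congr (_ _); congr (_ _); apply: val_inj => /=; by rewrite Hl Hj.
Qed.

Lemma p_lam_nat (X X' : SetOver C) (f : Hom X X') :
          heq (cmpH (lam X') (tensH (idH (Uob C)) f)) (cmpH f (lam X)).
Proof. move=> e /=; rewrite /lamf /=; by congr (_ _); congr (_ _); apply: val_inj. Qed.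

Lemma p_rho_nat (X X' : SetOver C) (f : Hom X X') :
          heq (cmpH (rho HC X') f) (cmpH (tensH f (idH (Uob C))) (rho HC X)).
Proof.
move=> x; apply: tens_el_eq => /=; first by rewrite hbd.
  done.
move=> i1 i2 H; apply: sig_eq => /=; by rewrite H hbd.
Qed.


Lemma p_unit1 : heq (cmpH (lam (Uob C)) (rho HC (Uob C))) (idH (Uob C)).
Proof.
move=> u; apply: sig_eq => /=.
case: u => u [H1 H2 H3] /=.
by rewrite H2 ?(dom_id HC) ?(cod_id HC).
Qed.

Lemma p_unit2 (X Y : SetOver C) : heq (cmpH (lam (tens X Y)) (alpha HC (Uob C) X Y))
                       (tensH (lam X) (idH Y)).
Proof.
move=> e; rewrite /= /lamf /=.
have Ht := U_triv (t_x e).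
have H1 : cod (t_arr e) = dom (t_arr (t_x e)) by rewrite -(t_xbd e).
apply: tens_el_eq => /=.
- by case: Ht => _ _ ->.
- by congr (_ _); apply: val_inj.
move=> l1 l2 Hl; congr (_ _); apply: val_inj => /=.
rewrite fibre_const0 ?nth_iota ?Hl //.
  by rewrite -H1.
move=> k Hk; have := cardf_bound HC Hk; rewrite U_card.
by case: (cardf _ k).
Qed.

Lemma p_unit3 (X Y : SetOver C) : heq (cmpH (alpha HC X Y (Uob C)) (rho HC (tens X Y)))
                       (tensH (idH X) (rho HC Y)).
Proof.
move=> e; apply: tens_el_eq => /=.
- by rewrite (cmp_idr HC).
- done.
move=> j1 j2 Hj; apply: tens_el_eq => /=.
- by rewrite (fibm_id HC) ?(t_ybd e j2) Hj.
- by congr (_ _); apply: val_inj.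
move=> l1 l2 Hl; apply: sig_eq => /=.
set psi := t_arr e.
have Hj2 : j1 < Defs.card (cod psi) by rewrite Hj.
have H0 : cod (idA (dom psi)) = dom psi := cod_id HC _.
have Hl' : l1 < size (fibre (cardf psi) (Defs.card (dom psi)) j1).
  by apply: ord_lt_eq; rewrite (cod_fibm HC H0 Hj2) (card_fib HC Hj2).
rewrite -Hl; move: Hl'; move: (nat_of_ord l1) => l Hl'.
have Hk : nth 0 (fibre (cardf psi) (Defs.card (dom psi)) j1) l < Defs.card (cod (idA (dom psi))).
  by rewrite H0; apply: nth_fibre_lt.
rewrite (double_slice_ob HC H0 Hk) nth_fibre_g // index_nth_fibre // (fibm_id HC Hj2).
by rewrite (t_ybd e j2) -Hj.
Qed.

Lemma p_unit4 (X Y : SetOver C) : heq (cmpH (tensH (idH X) (lam Y))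
                              (cmpH (alpha HC X (Uob C) Y) (tensH (rho HC X) (idH Y))))
                           (idH (tens X Y)).
Proof.
move=> e; apply: tens_el_eq => /=.
- by rewrite (t_xbd e) (cmp_idl HC).
- done.
move=> j1 j2 Hj; rewrite /lamf /=; congr (_ _); apply: val_inj => /=.
have Hj1 : j1 < Defs.card (cod (t_arr e)) by rewrite Hj.
rewrite -Hj; move: Hj1; move: (nat_of_ord j1) => j Hj1.
rewrite (t_xbd e) (dom_id HC) (@fibre_idlike _ _ j (fun k Hk => cardf_id HC Hk)) //.
Qed.


Lemma p_pent (W X Y Z : SetOver C) :
             heq (cmpH (tensH (idH W) (alpha HC X Y Z))
                   (cmpH (alpha HC W (tens X Y) Z) (tensH (alpha HC W X Y) (idH Z))))
                 (cmpH (alpha HC W X (tens Y Z)) (alpha HC (tens W X) Y Z)).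
Proof.
move=> e.
set th := t_arr e. set ph := t_arr (t_x e). set ps := t_arr (t_x (t_x e)).
have H1 : cod th = dom ph by rewrite -(t_xbd e).
have H2 : cod ph = dom ps by rewrite -(t_xbd (t_x e)).
apply: tens_el_eq => /=.
- by rewrite (cmpA HC H1 H2).
- done.
have Hc : cod (cmp ph th) = dom ps := etrans (cod_cmp HC H1) H2.
move=> j1 j2 Hj.
have Hj2 : j2 < Defs.card (cod ps).
  by apply: ord_lt_eq; rewrite (cod_cmp HC Hc).
apply: tens_el_eq => /=.
- by rewrite Hj (fibm_cmp HC H1 H2 Hj2).
- by congr (_ _); apply: val_inj => /=.
move=> m1 m2 Hm.
have Hm2 : m2 < size (fibre (cardf ps) (Defs.card (dom ps)) j2).
  by apply: ord_lt_eq; rewrite (cod_fibm HC Hc Hj2) (card_fib HC Hj2).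
apply: tens_el_eq => /=.
- rewrite Hm Hj.
  have Hk : nth 0 (fibre (cardf ps) (Defs.card (dom ps)) j2) m2 < Defs.card (cod ph).
    by rewrite H2; apply: nth_fibre_lt.
  by rewrite (double_slice_mor HC H1 H2 Hk) nth_fibre_g // index_nth_fibre.
- by congr (_ _); apply: val_inj => /=; rewrite Hm Hj.
move=> n1 n2 Hn; congr (_ _); apply: val_inj => /=.
have Hj1 : j1 < Defs.card (cod ps) by rewrite Hj.
have Hj1' : j1 < Defs.card (cod (cmp ps ph)) by rewrite (cod_cmp HC H2).
have H1' : cod th = dom (cmp ps ph) by rewrite (dom_cmp HC H2).
have Hcd : cod (fibm th (cmp ps ph) j1) = dom (fibm ph ps j1).
  by rewrite (cod_fibm HC H1' Hj1') (dom_fibm HC H2 Hj1).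
have Hm1 : m1 < Defs.card (cod (fibm ph ps j1)).
  by apply: ord_lt_eq; rewrite (cod_cmp HC Hcd).
have Hn1 : n1 < size (fibre (cardf (fibm ph ps j1)) (Defs.card (dom (fibm ph ps j1))) m1).
  by apply: ord_lt_eq; rewrite (cod_fibm HC Hcd Hm1) (card_fib HC Hm1).
have Hsz : Defs.card (dom (fibm ph ps j1))
           = size (fibre (cardf (cmp ps ph)) (Defs.card (dom ph)) j1).
  by rewrite (dom_fibm HC H2 Hj1) (card_fib HC Hj1') (dom_cmp HC H2).
rewrite -Hn -Hm -Hj.
move: Hn1; move: (nat_of_ord n1) => n Hn1.
move: Hm1 Hn1; move: (nat_of_ord m1) => m Hm1 Hn1.
rewrite (dom_cmp HC H2) Hsz; rewrite Hsz in Hn1.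
have Hm1' : m < size (fibre (cardf ps) (Defs.card (dom ps)) j1).
  by move: Hm1; rewrite (cod_fibm HC H2 Hj1) (card_fib HC Hj1).
apply: comb => //.
- move=> i Hi; rewrite -H2; exact: cardf_bound HC _ _ Hi.
- move=> i Hi; exact: cardf_cmp HC _ _ _ H2 Hi.
move=> l Hl; apply: (cardf_fibm HC) => //.
by rewrite (card_fib HC Hj1') (dom_cmp HC H2).
Qed.

End Sk.

Theorem theorem3p4 (C : opdata) (HC : is_opcat C) :
  exists (alpha : forall X Y Z : SetOver C,
                    Hom (tens (tens X Y) Z) (tens X (tens Y Z)))
         (lam : forall X : SetOver C, Hom (tens (Uob C) X) X)
         (rho : forall X : SetOver C, Hom X (tens X (Uob C))),
    [/\ alpha_formula alpha, lam_formula lam, rho_formula rho &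
        skew_monoidal alpha lam rho].
Proof.
exists (alpha HC), (@lam C), (rho HC).
split; [exact: alpha_ok | exact: lam_ok | exact: rho_ok |].
split; first exact: p_tens_id.
split; first exact: p_tens_cmp.
split; first exact: p_alpha_nat.
split; first exact: p_lam_nat.
split; first exact: p_rho_nat.
split; first exact: p_unit1.
split; first exact: p_unit2.
split; first exact: p_unit3.
split; first exact: p_unit4.
exact: p_pent.
Qed.
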